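(* Let $k<\omega$ and let $\chi$ be an infinite cardinal with $\chi^{\aleph_0}=\chi$. For $\ell\le k$ let $S_\ell=\beth_\ell(\chi)$ (as a set of ordinals), and let $\Lambda=\prod_{\ell\le k}{}^\omega(S_\ell)$. Then there is a family $\langle\alpha_{\bar\eta,m,n}:\bar\eta\in\Lambda,\ m\le k,\ n<\omega\rangle$ of ordinals $\alpha_{\bar\eta,m,n}<\chi$ such that for every function $h:\Lambda_{\le k}\to\chi$ and every sequence $\langle\gamma_\ell:\ell\le k\rangle$ with $\gamma_\ell<\beth_\ell(\chi)$, there is $\bar\eta\in\Lambda$ with $\eta_\ell(0)=\gamma_\ell$ for all $\ell\le k$ and $h(\bar\eta\upharpoonleft\langle m,n\rangle)=\alpha_{\bar\eta,m,n}$ for all $m\le k$ and $n<\omega$.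
   Context: $\beth_0(\chi)=\chi$, $\beth_{\ell+1}(\chi)=2^{\beth_\ell(\chi)}$. For a set $X$, ${}^\omega X$ is the set of functions $\omega\to X$; $\Lambda$ consists of sequences $\bar\eta=\langle\eta_0,\dots,\eta_k\rangle$ with $\eta_\ell\in{}^\omega(S_\ell)$. For $\bar\eta\in\Lambda$, $m\le k$, $n<\omega$, $\bar\eta\upharpoonleft\langle m,n\rangle$ is the sequence obtained from $\bar\eta$ by replacing $\eta_m$ with its restriction $\eta_m\restriction n$ (a finite sequence). $\Lambda_m=\{\bar\eta\upharpoonleft\langle m,n\rangle:\bar\eta\in\Lambda,n<\omega\}$ and $\Lambda_{\le k}=\bigcup_{m\le k}\Lambda_m$. *)

(* Defs.v *)
From mathcomp Require Import all_boot.
Set Implicit Arguments. Unset Strict Implicit. Unset Printing Implicit Defensive.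

(* Cardinals are represented by types (up to bijection).
   beth l X : beth_0(X) = X, beth_{l+1}(X) = power set of beth_l(X). *)
Fixpoint beth (X : Type) (l : nat) : Type :=
  match l with
  | 0 => X
  | l'.+1 => beth X l' -> Prop
  end.

Definition Lam (X : Type) (k : nat) : Type :=
  forall l : 'I_k.+1, nat -> beth X l.

(* Lambda_{<= k}: an element of Lambda_m is a sequence whose m-th entry is a
   finite sequence (eta_m restricted to n, a list of length n) and whose other
   entries l <> m are omega-sequences. *)
Definition LamLe (X : Type) (k : nat) : Type :=
  { m : 'I_k.+1 & (seq (beth X m) * (forall l : 'I_k.+1, l != m -> nat -> beth X l))%type }.

Definition restr (X : Type) (k : nat) (eta : Lam X k) (m : 'I_k.+1) (n : nat)
  : LamLe X k :=
  existT _ m (mkseq (eta m) n, fun l (_ : l != m) => eta l).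

Definition infinite_type (X : Type) : Prop :=
  exists f : nat -> X, injective f.

Definition omega_power_eq (X : Type) : Prop :=
  exists f : (nat -> X) -> X, bijective f.

(* Main.v *)
Require Import Defs.
From mathcomp Require Import all_boot.
From Stdlib Require Import ClassicalEpsilon FunctionalExtensionality PropExtensionality.

Definition inh (X : Type) (x0 : X) (i : nat) : beth X i :=
  match i return beth X i with 0 => x0 | i'.+1 => fun _ => True end.
Arguments inh {X}.

Lemma enc_ex {X : Type} (x0 : X) (Xinf : infinite_type X) (Xom : omega_power_eq X) :
  forall i, exists enc : option nat * beth X i -> beth X i, injective enc.
Proof.
elim=> [|i [enc encI]].
  case: Xinf => g gI; case: Xom => f [f' ff' _].
  exists (fun p => f (fun n => match n with 0 => p.2 | _ => g (oapp S 0 p.1) end)).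
  move=> [o b] [o' b'] /(can_inj ff') E.
  have E0 := congr1 (fun F => F 0) E; have E1 := gI _ _ (congr1 (fun F => F 1) E).
  clear E; simpl in E0, E1; subst b'; case: o o' E1 => [?|] [?|] //=; congruence.
exists (fun p : option nat * beth X i.+1 => fun t : beth X i =>
   (exists u, t = enc (None, u) /\ p.2 u) \/ t = enc (Some (oapp S 0 p.1), inh x0 i)).
move=> [o P] [o' P'] /= E.
have HP : P = P'.
  apply: functional_extensionality => u; apply: propositional_extensionality.
  have Et := congr1 (fun F => F (enc (None, u))) E; simpl in Et.
  split=> H.
  - have : (exists u0, enc (None, u) = enc (None, u0) /\ P u0) \/ enc (None, u) = enc (Some (oapp S 0 o), inh x0 i) by left; exists u.
    rewrite Et => -[[u0 [/encI [->] H0]]//|/encI//].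
  - have : (exists u0, enc (None, u) = enc (None, u0) /\ P' u0) \/ enc (None, u) = enc (Some (oapp S 0 o'), inh x0 i) by left; exists u.
    rewrite -Et => -[[u0 [/encI [->] H0]]//|/encI//].
subst P'; congr (_, _).
have Et := congr1 (fun F => F (enc (Some (oapp S 0 o), inh x0 i))) E; simpl in Et.
have : (exists u0, enc (Some (oapp S 0 o), inh x0 i) = enc (None, u0) /\ P u0) \/ enc (Some (oapp S 0 o), inh x0 i) = enc (Some (oapp S 0 o), inh x0 i) by right.
rewrite Et => -[[u0 [/encI //]]|/encI [] ].
by clear E Et; case: o o' => [?|] [?|] //= [->].
Qed.
Lemma key_ex {X : Type} (k : nat) (x0 : X) (Xinf : infinite_type X) (Xom : omega_power_eq X) :
  forall i, exists key : Lam X k -> X -> beth X i,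
    forall eta eta' x x', key eta x = key eta' x' ->
      x = x' /\ forall l : 'I_k.+1, l <= i -> eta l = eta' l.
Proof.
elim=> [|i [key keyI]].
  case: Xom => f [f' ff' _].
  exists (fun (eta : Lam X k) x => f (fun n => match n with 0 => x | n'.+1 => eta ord0 n' end)).
  move=> eta eta' x x' /(can_inj ff') E; split; first exact: (congr1 (fun F => F 0) E).
  move=> l; rewrite leqn0 => /eqP l0.
  have -> : l = ord0 by apply: val_inj.
  apply: functional_extensionality => n; exact: (congr1 (fun F => F n.+1) E).
have [enc encI] := enc_ex (X:=X) x0 Xinf Xom i.
case: (boolP (i.+1 < k.+1)) => H.
  pose l1 := Ordinal H.
  exists (fun (eta : Lam X k) x => fun t : beth X i => t = enc (None, key eta x) \/
     exists n u, t = enc (Some n, u) /\ eta l1 n u).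
  move=> eta eta' x x' E.
  have Et := congr1 (fun F => F (enc (None, key eta x))) E; simpl in Et.
  have : enc (None, key eta x) = enc (None, key eta x) \/
     exists n u, enc (None, key eta x) = enc (Some n, u) /\ eta l1 n u by left.
  rewrite Et => -[/encI [/keyI [xx' Hl]]|[n [u [/encI //]]]].
  split => // l; rewrite leq_eqVlt ltnS => /orP [/eqP li|]; last exact: Hl.
  have -> : l = l1 by apply: val_inj.
  apply: functional_extensionality => n; apply: functional_extensionality => u.
  apply: propositional_extensionality.
  have Eu := congr1 (fun F => F (enc (Some n, u))) E; simpl in Eu.
  split => Hu.
  - have : enc (Some n, u) = enc (None, key eta x) \/
      exists n0 u0, enc (Some n, u) = enc (Some n0, u0) /\ eta l1 n0 u0 by right; exists n, u.
    by rewrite Eu => -[/encI //|[n0 [u0 [/encI [-> ->]]]]].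
  - have : enc (Some n, u) = enc (None, key eta' x') \/
      exists n0 u0, enc (Some n, u) = enc (Some n0, u0) /\ eta' l1 n0 u0 by right; exists n, u.
    by rewrite -Eu => -[/encI //|[n0 [u0 [/encI [-> ->]]]]].
exists (fun (eta : Lam X k) x => fun t : beth X i => t = key eta x).
move=> eta eta' x x' E.
have Et := congr1 (fun F => F (key eta x)) E; simpl in Et.
have : key eta x = key eta x by [].
rewrite Et => /keyI [xx' Hl]; split => // l li; apply: Hl.
have := ltn_ord l; rewrite ltnS => lk.
by rewrite ltnS -ltnNge ltnS in H; exact: leq_trans lk H.
Qed.
Definition dep {X : Type} {k : nat} (G : Lam X k -> X) (m : nat) :=
  forall nu nu' : Lam X k, (forall l : 'I_k.+1, l < m -> nu l = nu' l) -> G nu = G nu'.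

Lemma code_ex {X : Type} (k : nat) (x0 : X) (Xinf : infinite_type X) (Xom : omega_power_eq X) :
  forall m, exists dec : beth X m -> Lam X k -> X,
    forall G : Lam X k -> X, dep G m -> exists c, forall nu, dec c nu = G nu.
Proof.
case=> [|i].
  exists (fun c _ => c) => G dG.
  exists (G (fun l n => inh x0 l)) => nu; apply: dG => l //.
have [key keyI] := key_ex k x0 Xinf Xom i.
exists (fun c nu => epsilon (inhabits x0) (fun x => c (key nu x))) => G dG.
exists (fun t => exists eta, t = key eta (G eta)) => nu.
have [eta /keyI [-> Hl]] : exists eta, key nu (epsilon (inhabits x0) (fun x => exists eta, key nu x = key eta (G eta))) = key eta (G eta).
  apply: (epsilon_spec (inhabits x0) (fun x => exists eta, key nu x = key eta (G eta))).
  by exists (G nu), nu.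
by apply: dG => l; rewrite ltnS => /Hl.
Qed.
Fixpoint build {B : Type} (next : nat -> seq B -> B) (n : nat) : seq B :=
  match n with 0 => [::] | n'.+1 => rcons (build next n') (next n' (build next n')) end.

Lemma size_build B next n : size (@build B next n) = n.
Proof. by elim: n => //= n IH; rewrite size_rcons IH. Qed.

Lemma mkseq_build {B} (b0 : B) next n :
  mkseq (fun t => nth b0 (@build B next t.+1) t) n = build next n.
Proof.
elim: n => // n IH; rewrite mkseqS IH /= nth_rcons size_build ltnn eqxx //.
Qed.

Theorem claim2p1 (k : nat) (X : Type)
  (Xinf : infinite_type X) (Xom : omega_power_eq X) :
  exists alpha : Lam X k -> 'I_k.+1 -> nat -> X,
    forall (h : LamLe X k -> X) (gamma : forall l : 'I_k.+1, beth X l),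
      exists eta : Lam X k,
        (forall l : 'I_k.+1, eta l 0 = gamma l) /\
        (forall (m : 'I_k.+1) (n : nat), h (restr eta m n) = alpha eta m n).
Proof.
case: (Xinf) => f0 _; pose x0 := f0 0.
pose D m := proj1_sig (constructive_indefinite_description _ (code_ex k x0 Xinf Xom m)).
have DP m : forall G : Lam X k -> X, dep G m -> exists c, forall nu, D m c nu = G nu.
  exact: (proj2_sig (constructive_indefinite_description _ (code_ex k x0 Xinf Xom m))).
exists (fun (eta : Lam X k) (j : 'I_k.+1) n => D j (eta j n.+1) eta) => h gamma.
suff: forall d, d <= k.+1 -> exists eta : Lam X k,
   (forall l : 'I_k.+1, k.+1 - d <= l -> eta l 0 = gamma l) /\
   (forall eta' : Lam X k, (forall l : 'I_k.+1, k.+1 - d <= l -> eta' l = eta l) ->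
      forall m : 'I_k.+1, k.+1 - d <= m -> forall n, h (restr eta' m n) = D m (eta' m n.+1) eta').
  move=> /(_ k.+1 (leqnn _)) [eta [H1 H2]]; exists eta; split => [l|m n].
    by apply: H1; rewrite subnn.
  by apply: H2 => //; rewrite subnn.
elim=> [|d IH] dk.
  exists (fun l n => inh x0 l); split => [l|eta' _ m]; by rewrite subn0 leqNgt ltn_ord.
have [eta [Hg Hh]] := IH (ltnW dk).
have jk : k - d < k.+1 by rewrite ltnS leq_subr.
pose jo := Ordinal jk.
pose G (n : nat) (L : seq (beth X jo)) : Lam X k -> X := fun nu =>
  h (existT _ jo (L, fun l (_ : l != jo) => if l < jo then nu l else eta l)).
have dG n L : dep (G n L) jo.
  move=> nu nu' E; rewrite /G; congr (h (existT _ jo (L, _))).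
  apply: functional_extensionality_dep => l; apply: functional_extensionality => _.
  by case: ifP => // /E ->.
pose step n L := proj1_sig (constructive_indefinite_description _ (DP jo (G n L) (dG n L))).
have stepP n L nu : D jo (step n L) nu = G n L nu.
  exact: (proj2_sig (constructive_indefinite_description _ (DP jo (G n L) (dG n L)))).
pose next t (L : seq (beth X jo)) := match t with 0 => gamma jo | s.+1 => step s (take s L) end.
pose etaj t := nth (gamma jo) (build next t.+1) t.
have etajE t : etaj t = next t (build next t).
  by rewrite /etaj /= nth_rcons size_build ltnn eqxx.
pose etan : Lam X k := dfwith eta etaj.
exists etan; split.
  move=> l; rewrite subSS => lj; rewrite /etan; case: (eqVneq jo l) => [<-|ne].
    by rewrite dfwith_in etajE.
  rewrite dfwith_out //; apply: Hg; rewrite subSn; last exact: dk.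
  rewrite ltn_neqAle lj andbT; apply: contra ne => /eqP e.
  by apply/eqP/val_inj.
move=> eta' E' m; rewrite subSS => mj n.
have E : forall l : 'I_k.+1, k.+1 - d <= l -> eta' l = eta l.
  move=> l lj; have ne : jo != l.
    apply/negP => /eqP e; move: lj; rewrite -e /= subSn; last exact: dk.
    by rewrite ltnn.
  rewrite E'; first by rewrite /etan dfwith_out.
  rewrite subSS; apply: leq_trans lj; rewrite subSn; last exact: dk.
  exact: leqnSn.
case: (boolP (k.+1 - d <= m)) => [mj'|]; first exact: Hh.
rewrite -ltnNge subSn; last exact: dk.
rewrite ltnS => mj2.
have -> : m = jo by apply: val_inj; apply/eqP; rewrite eqn_leq mj mj2.
have Ej : eta' jo = etaj by rewrite E'; [rewrite /etan dfwith_in | rewrite subSS].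
rewrite Ej etajE /= stepP.
have -> : take n (rcons (build next n) (next n (build next n))) = build next n.
  by rewrite -cats1 take_size_cat // size_build.
rewrite /restr /G Ej -[build next n](mkseq_build (gamma jo)).
congr (h (existT _ jo (_, _))).
apply: functional_extensionality_dep => l; apply: functional_extensionality => ne.
case: ifP => // lj; apply: E.
rewrite subSn; last exact: dk.
rewrite ltn_neqAle leqNgt lj andbT; by apply: contra ne => /eqP e; apply/eqP/val_inj.
Qed.
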